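(* If $M$ is a restricted Kripke model, $U$ is an atemporal action model over $L_{\mathsf{YDEL}}$, and $W^{M\oplus U}\neq\emptyset$, then $M\oplus U$ is a restricted Kripke model.
   Context: Fix a nonempty finite set $\mathsf{Agt}$ of agents and a nonempty set $\mathsf{Prop}$ of letters. A Kripke model is $M=(W^M,(\to^M_a)_a,\leadsto^M,V^M)$: nonempty $W^M$, binary relations $\to^M_a,\leadsto^M$ ($w'\leadsto w$: $w'$ is a yesterday of $w$), valuation $V^M:\mathsf{Prop}\to\mathcal P(W^M)$. A progression is a finite nonempty $x_0,\dots,x_n$ with $x_i\leadsto x_{i+1}$; a history is one not extendable at its beginning; $\mathrm{depth}(x)$ is the maximal length of a history ending at $x$ ($\infty$ if none). $M$ is restricted if: $w\leadsto w'$ implies $w\in V(p)\iff w'\in V(p)$ (persistence of facts); all depths finite; $w'\leadsto w\to_av$ implies $\exists v'\leadsto v$ (knowledge of the past); $w\to_av$ and no $w'\leadsto w$ imply no $v'\leadsto v$ (knowledge of initial time); $w'\leadsto w$, $w''\leadsto w$ imply $w'=w''$ (uniqueness of the past); $w\leadsto v\to_av'$ implies $\exists w'$ with $w\to_aw'\leadsto v'$ (perfect recall). An action model over a set of formulas $F$ is $U=(W^U,(\to^U_a)_a,\leadsto^U,\mathrm{pre}^U)$ with $W^U$ nonempty finite, binary relations, $\mathrm{pre}^U:W^U\to F$; atemporal means $\leadsto^U=\emptyset$. $L_{\mathsf{YDEL}}$: $\varphi::=p\mid\neg\varphi\mid\varphi\wedge\varphi\mid\Box_a\varphi\mid[Y]\varphi\mid[U,s]\varphi$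 with $(U,s)$ a pointed atemporal action model over $L_{\mathsf{YDEL}}$; the symbol $\flat$ is never a world or event. $\mathsf{YDEL}$ semantics on pointed restricted models: Boolean standard; $M,w\models_{\mathsf{YDEL}}\Box_a\varphi$ iff $\varphi$ holds at all $v$ with $w\to^M_av$; $M,w\models_{\mathsf{YDEL}}[Y]\varphi$ iff $\varphi$ holds at all $v\leadsto^Mw$; $M,w\models_{\mathsf{YDEL}}[U,s]\varphi$ iff $M,w\models_{\mathsf{YDEL}}\mathrm{pre}^U(s)$ implies $M\oplus U,(w,s)\models_{\mathsf{YDEL}}\varphi$, where $W^{M\oplus U}=(W^M\times\{\flat\})\cup\{(v,t)\in W^M\times W^U:M,v\models_{\mathsf{YDEL}}\mathrm{pre}^U(t)\}$; $(v,t)\to_a(v',t')$ iff ($t,t'\ne\flat$, $v\to^M_av'$, $t\to^U_at'$) or ($t=t'=\flat$, $v\to^M_av'$); $(v,t)\leadsto(v',t')$ iff ($t=\flat$, $t'\ne\flat$, $v=v'$) or ($t=t'=\flat$, $v\leadsto^Mv'$); $(v,t)\in V(p)$ iff $v\in V^M(p)$. *)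

(* Defs.v *)
From mathcomp Require Import all_boot.
Set Implicit Arguments. Unset Strict Implicit. Unset Printing Implicit Defensive.

Section YDEL.
Variable Agt : finType.
Variable Prp : Type.

(* Kripke structure over a carrier W (nonemptiness is part of [restricted]). *)
Record model (W : Type) := Model {
  mrel  : Agt -> W -> W -> Prop;
  myest : W -> W -> Prop;            (* w' ~> w : w' is a yesterday of w *)
  mval  : Prp -> W -> Prop
}.

(* Formulas of L_YDEL.  An action-model modality [U,s] carries the
   (atemporal) action model unpacked: events 'I_n.+1 (nonempty finite),
   relations ->_a, preconditions, and the point s. *)
Inductive form : Type :=
| FVar : Prp -> form
| FNeg : form -> form
| FAnd : form -> form -> form
| FBox : Agt -> form -> form
| FY   : form -> form
| FAct : forall n : nat, (Agt -> 'I_n.+1 -> 'I_n.+1 -> Prop) ->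
           ('I_n.+1 -> form) -> 'I_n.+1 -> form -> form.

(* Worlds of the product M (+) U; [None] plays the role of the symbol flat. *)
Definition prodW (W : Type) (n : nat) (ok : W -> 'I_n.+1 -> Prop) :=
  {x : W * option 'I_n.+1 | if x.2 is Some t then ok x.1 t else True}.

Definition prodM (W : Type) (M : model W) (n : nat)
  (arel : Agt -> 'I_n.+1 -> 'I_n.+1 -> Prop) (ok : W -> 'I_n.+1 -> Prop)
  : model (prodW ok) :=
  Model
    (fun a (x y : prodW ok) =>
       match (sval x).2, (sval y).2 with
       | Some t, Some t' => mrel M a (sval x).1 (sval y).1 /\ arel a t t'
       | None, None => mrel M a (sval x).1 (sval y).1
       | _, _ => False
       end)
    (fun (x y : prodW ok) =>
       ((sval x).2 = None /\ (sval y).2 <> None /\ (sval x).1 = (sval y).1)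
       \/ ((sval x).2 = None /\ (sval y).2 = None /\ myest M (sval x).1 (sval y).1))
    (fun p (x : prodW ok) => mval M p (sval x).1).

Fixpoint sat (phi : form) : forall (W : Type), model W -> W -> Prop :=
  match phi with
  | FVar p => fun W M w => mval M p w
  | FNeg f => fun W M w => ~ sat f M w
  | FAnd f g => fun W M w => sat f M w /\ sat g M w
  | FBox a f => fun W M w => forall v, mrel M a w v -> sat f M v
  | FY f => fun W M w => forall v, myest M v w -> sat f M v
  | FAct n arel pre s f => fun W M w =>
      forall h : sat (pre s) M w,
        sat f (prodM M arel (fun v t => sat (pre t) M v))
              (exist (fun x : W * option 'I_n.+1 =>
                        if x.2 is Some t then sat (pre t) M x.1 else True)
                     (w, Some s) h)
  end.

(* Action models over L_YDEL (with a temporal relation, so that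
   "atemporal" is a genuine hypothesis). *)
Record amodel := AModel {
  an : nat;
  arel : Agt -> 'I_an.+1 -> 'I_an.+1 -> Prop;
  ayest : 'I_an.+1 -> 'I_an.+1 -> Prop;
  apre : 'I_an.+1 -> form
}.

Definition atemporal (U : amodel) : Prop := forall s t, ~ @ayest U s t.

Definition updW (W : Type) (M : model W) (U : amodel) : Type :=
  prodW (fun v t => sat (@apre U t) M v).
Definition upd (W : Type) (M : model W) (U : amodel) : model (updW M U) :=
  prodM M (@arel U) (fun v t => sat (@apre U t) M v).

(* Progressions x_0,...,x_n encoded as f : nat -> W on indices 0..n. *)
Definition progression (W : Type) (M : model W) (f : nat -> W) (n : nat) : Prop :=
  forall i, i < n -> myest M (f i) (f i.+1).
Definition history (W : Type) (M : model W) (f : nat -> W) (n : nat) : Prop :=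
  progression M f n /\ ~ (exists y, myest M y (f 0)).
(* depth(x) is finite iff the lengths of the histories ending at x have a maximum *)
Definition finite_depth (W : Type) (M : model W) (x : W) : Prop :=
  exists N, (exists f, history M f N /\ f N = x) /\
            (forall f n, history M f n -> f n = x -> n <= N).

Definition restricted (W : Type) (M : model W) : Prop :=
  inhabited W /\
  (forall w w' p, myest M w w' -> (mval M p w <-> mval M p w')) /\
  (forall x, finite_depth M x) /\
  (forall w' w a v, myest M w' w -> mrel M a w v -> exists v', myest M v' v) /\
  (forall w a v, mrel M a w v -> (~ exists w', myest M w' w) ->
                  ~ exists v', myest M v' v) /\
  (forall w' w'' w, myest M w' w -> myest M w'' w -> w' = w'') /\
  (forall w v a v', myest M w v -> mrel M a v v' ->
                     exists w', mrel M a w w' /\ myest M w' v').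

End YDEL.

(* Main.v *)
Require Import Defs.
From mathcomp Require Import all_boot.
From Stdlib Require Import ProofIrrelevance.
Set Implicit Arguments. Unset Strict Implicit.

Section Aux.
Variables (Agt : finType) (Prp : Type) (W : Type) (M : model Agt Prp W) (U : amodel Agt Prp).

Definition mk (v : W) : updW M U :=
  exist (fun x : W * option 'I_(an U).+1 =>
           if x.2 is Some t then sat (apre t) M x.1 else True) (v, None) I.

Lemma sigE (x y : updW M U) : sval x = sval y -> x = y.
Proof.
case: x y => [x px] [y py] /= e; subst y.
by rewrite (proof_irrelevance _ px py).
Qed.

Lemma yestE (x y : updW M U) : myest (upd M U) x y <->
  ((sval x).2 = None /\ (sval y).2 <> None /\ (sval x).1 = (sval y).1)
  \/ ((sval x).2 = None /\ (sval y).2 = None /\ myest M (sval x).1 (sval y).1).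
Proof. by []. Qed.

Lemma relE a (x y : updW M U) : mrel (upd M U) a x y <->
  match (sval x).2, (sval y).2 with
  | Some t, Some t' => mrel M a (sval x).1 (sval y).1 /\ @arel Agt Prp U a t t'
  | None, None => mrel M a (sval x).1 (sval y).1
  | _, _ => False end.
Proof. by []. Qed.

Lemma yest_none x y : myest (upd M U) x y -> (sval x).2 = None.
Proof. by move/yestE => [[]|[]]. Qed.

Lemma some_has_yest x t : (sval x).2 = Some t -> myest (upd M U) (mk (sval x).1) x.
Proof. move=> e; apply/yestE; left; by rewrite e. Qed.

Lemma hist_f0 f n : history (upd M U) f n -> (sval (f 0)).2 = None.
Proof.
move=> [_ nh]; case e: (sval (f 0)).2 => [t|] //.
by exfalso; apply: nh; exists (mk (sval (f 0)).1); apply: some_has_yest e.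
Qed.

Lemma hist_to_M f n : history (upd M U) f n -> forall m, m <= n ->
  (sval (f m)).2 = None -> history M (fun i => (sval (f i)).1) m.
Proof.
move=> h m lemn em; split.
  move=> i lti.
  have lin : i < n by apply: leq_trans lti lemn.
  have e1 : (sval (f i.+1)).2 = None.
    case: (ltnP i.+1 n) => [l|l].
      exact: (yest_none (h.1 _ l)).
    have -> : i.+1 = m by apply/eqP; rewrite eqn_leq lti (leq_trans lemn l).
    exact: em.
  by move: (h.1 i lin) => /yestE [[_ [] //]|[_ [_ ?]]].
move=> [y hy]; apply: h.2; exists (mk y); apply/yestE; right.
by split=> //; split=> //; apply: hist_f0 h.
Qed.
End Aux.

Theorem corollary32 (Agt : finType) (Prp : Type)
  (hAgt : inhabited Agt) (hPrp : inhabited Prp)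
  (W : Type) (M : model Agt Prp W) (U : amodel Agt Prp) :
  restricted M -> atemporal U -> inhabited (updW M U) ->
  restricted (upd M U).
Proof.
move=> [_ [Hpers [Hdep [Hkp [Hki [Hun Hpr]]]]]] _ Hinh.
split=> //; split.
  move=> w w' p /yestE [[_ [_ e]]|[_ [_ y]]] /=; first by rewrite e.
  exact: Hpers.
split.
  move=> x.
  case ex: (sval x) => [v o].
  have [N [[g [gh gN]] gb]] := Hdep v.
  case: o ex => [t|] ex.
  - exists N.+1; split.
      exists (fun i => if i <= N then mk M U (g i) else x); split; last by rewrite ltnn.
      split.
        move=> i lti; have iN : i <= N by [].
        apply/yestE; rewrite iN /=.
        case: (leqP i.+1 N) => l.
          by right; split=> //; split=> //; apply: gh.1.
        left; rewrite ex /=; split=> //; split=> //.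
        have -> // : i = N by apply/eqP; rewrite eqn_leq iN -ltnS l.
      by rewrite leq0n /= => -[y hy]; apply: gh.2; exists (sval y).1; move: hy => [[_ [] //]|[_ [_ ?]]].
    move=> f n fh fn.
    case: n fh fn => [|m] fh fn.
      by move: (hist_f0 fh); rewrite fn ex.
    have em : (sval (f m)).2 = None by apply: (yest_none (fh.1 m _)).
    have := hist_to_M fh (leqnSn m) em => hm.
    have : (sval (f m)).1 = v.
      move: (fh.1 m (ltnSn m)) => /yestE [[_ [_ e]]|[_ [e _]]].
        by rewrite e fn ex.
      by rewrite fn ex in e.
    move=> fv; apply: (gb _ _ hm fv).
  - exists N; split.
      exists (fun i => mk M U (g i)); split.
        split.
          by move=> i lti; apply/yestE; right; split=> //; split=> //; apply: gh.1.
        move=> [y hy]; apply: gh.2; exists (sval y).1; by move: hy => /yestE [[_ [] //]|[_ [_ ?]]].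
      apply: sigE; by rewrite ex /= gN.
    move=> f n fh fn.
    apply: (gb _ _ (hist_to_M fh (leqnn n) _)); by rewrite fn ex.
split.
  move=> w' w a v /yestE hy /relE.
  case ew: (sval w).2 => [t|]; case ev: (sval v).2 => [t'|] // hr.
  + by exists (mk M U (sval v).1); apply: some_has_yest ev.
  + case: hy => [[_ [] //]|[_ [_ hy]]].
    have [v' hv'] := Hkp _ _ _ _ hy hr.
    by exists (mk M U v'); apply/yestE; right.
split.
  move=> w a v /relE hr hn [v' /yestE hv].
  case ew: (sval w).2 hr => [t|].
    by move=> _; apply: hn; exists (mk M U (sval w).1); apply: some_has_yest ew.
  case ev: (sval v).2 => [t'|] // hr.
  case: hv => [[_ [] //]|[_ [_ hv]]].
  apply: (Hki _ _ _ hr) => [[y hy]|]; last by exists (sval v').1.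
  by apply: hn; exists (mk M U y); apply/yestE; right.
split.
  move=> w' w'' w /yestE h1 /yestE h2; apply: sigE.
  case: (sval w') h1 => [a1 o1]; case: (sval w'') h2 => [a2 o2] /=.
  move=> [[e2 [n2 f2]]|[e2 [n2 f2]]] [[e1 [n1 f1]]|[e1 [n1 f1]]].
  - by rewrite e1 e2 f1 f2.
  - by rewrite n1 in n2.
  - by rewrite n2 in n1.
  - by rewrite e1 e2 (Hun _ _ _ f1 f2).
move=> w v a v' /yestE hy /relE.
case ev: (sval v).2 => [t|]; case ev': (sval v').2 => [t'|] // hr.
- case: hy => [[ew [_ e]]|[_ [en _]]]; last by rewrite ev in en.
  exists (mk M U (sval v').1); split.
    by apply/relE; rewrite ew /= e; case: hr.
  by apply: some_has_yest ev'.
- case: hy => [[_ [ne _]]|[ew [_ hy2]]]; first by rewrite ev in ne.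
  have [w0 [h1 h2]] := Hpr _ _ _ _ hy2 hr.
  exists (mk M U w0); split.
    by apply/relE; rewrite ew.
  by apply/yestE; right.
Qed.
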